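(* Let $T\in\{0,1\}$, $X\in\mathcal{X}\subset\mathbb{R}^d$ and real-valued potential outcomes $Y_0,Y_1$ be random variables on a common probability space, and let $p_F$ be the law of $(X,T,Y_T)$ and $p_{CF}$ the law of $(X,1-T,Y_{1-T})$. Let $B\sim\mathrm{Bernoulli}(1/2)$ be independent of $(X,T,Y_0,Y_1)$, let $S=T$ if $B=1$ and $S=1-T$ if $B=0$, let $p_{IF}$ be the law of $(X,S,Y_S)$ (so $p_{IF}=\tfrac12 p_F+\tfrac12 p_{CF}$, the ideal factual distribution) and $p_{ICF}$ the law of $(X,1-S,Y_{1-S})$ (its counterfactual distribution). Then for every measurable $h:\mathcal{X}\times\{0,1\}\to\mathbb{R}$, $\mathcal{L}_{p_{IF}}(h)=\mathcal{L}_{p_{ICF}}(h)$, where for a law $p$ of a triple $(X',T',Y')$, $\mathcal{L}_p(h)=\int (y-h(x,t))^2\,p(x,t,y)\,dx\,dt\,dy=\mathbb{E}[(Y'-h(X',T'))^2]\in[0,\infty]$.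
   Context: Potential-outcomes setting: $Y_t$ is the outcome that would be observed under treatment $t$; the counterfactual distribution of a factual law of $(X,T,Y_T)$ is the law obtained by inverting the treatment assignment, i.e. of $(X,1-T,Y_{1-T})$. *)

(* Defs.v *)
From HB Require Import structures.
From mathcomp Require Import all_boot all_order all_algebra.
From mathcomp Require Import all_classical all_reals all_analysis.
Set Implicit Arguments. Unset Strict Implicit. Unset Printing Implicit Defensive.
Import Order.TTheory GRing.Theory Num.Theory.
Local Open Scope classical_set_scope.
Local Open Scope ring_scope.

Definition indep_rv {d} {Omega : measurableType d} {R : realType}
  (P : probability Omega R) {dA dB} {A : measurableType dA} {B : measurableType dB}
  (U : Omega -> A) (V : Omega -> B) : Prop :=
  forall (EA : set A) (EB : set B), measurable EA -> measurable EB ->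
    P (U @^-1` EA `&` V @^-1` EB) = (P (U @^-1` EA) * P (V @^-1` EB))%E.

Definition sq_loss {d} {Omega : measurableType d} {R : realType}
  (P : probability Omega R) {n : nat}
  (X' : Omega -> n.-tuple R) (T' : Omega -> bool) (Y' : Omega -> R)
  (h : n.-tuple R * bool -> R) : \bar R :=
  (\int[P]_w ((Y' w - h (X' w, T' w)) ^+ 2)%:E)%E.

Definition sel_outcome {Omega R : Type} (Y0 Y1 : Omega -> R) (t : Omega -> bool)
  : Omega -> R := fun w => if t w then Y1 w else Y0 w.

(* Main.v *)
Require Import Defs.
From HB Require Import structures.
From mathcomp Require Import all_boot all_order all_algebra.
From mathcomp Require Import all_classical all_reals all_analysis.
From mathcomp Require Import ring lra.
From mathcomp Require Import measurable_realfun.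
Import Order.TTheory GRing.Theory Num.Theory.
Local Open Scope classical_set_scope.
Local Open Scope ring_scope.

Lemma half_split (R : realType) d0 (Omega : measurableType d0)
  (P : probability Omega R) dZ (Z : measurableType dZ) (ZZ : Omega -> Z)
  (B : Omega -> bool) (mB : measurable_fun setT B)
  (mZ : measurable_fun setT ZZ)
  (PB : P (B @^-1` [set true]) = (2^-1)%:E)
  (indB : indep_rv P B ZZ) (b : bool) (A : set Z) : measurable A ->
  P (B @^-1` [set b] `&` ZZ @^-1` A) = ((2^-1)%:E * P (ZZ @^-1` A))%E.
Proof.
move=> mA; rewrite indB //; congr (_ * _)%E.
case: b => //.
have -> : B @^-1` [set false] = ~` (B @^-1` [set true]).
  by apply/seteqP; split => w /=; case: (B w).
rewrite probability_setC; last by rewrite -[X in measurable X]setTI; apply: mB.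
rewrite PB -EFinB; congr (_%:E).
  field.
all: by [].
Qed.

Lemma push_swap (R : realType) d0 (Omega : measurableType d0)
  (P : probability Omega R) dZ (Z : measurableType dZ) (ZZ : Omega -> Z)
  (B : Omega -> bool) (mB : measurable_fun setT B)
  (mZ : measurable_fun setT ZZ)
  (PB : P (B @^-1` [set true]) = (2^-1)%:E)
  (indB : indep_rv P B ZZ) (E : set (bool * Z)) : measurable E ->
  P ((fun w => (B w, ZZ w)) @^-1` E) = P ((fun w => (~~ B w, ZZ w)) @^-1` E).
Proof.
move=> mE.
have mEb b : measurable (xsection E b) by exact: measurable_xsection.
have mZA A : measurable A -> measurable (ZZ @^-1` A).
  by move=> mA; rewrite -[X in measurable X]setTI; apply: mZ.
have mBb b : measurable (B @^-1` [set b]).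
  by rewrite -[X in measurable X]setTI; apply: mB.
have dec (G : Omega -> bool) : (fun w => (G w, ZZ w)) @^-1` E =
  (G @^-1` [set true] `&` ZZ @^-1` xsection E true) `|`
  (G @^-1` [set false] `&` ZZ @^-1` xsection E false).
  apply/seteqP; split => w /=.
    by rewrite /xsection /=; case: (G w) => H; [left|right]; split => //; rewrite inE.
  by rewrite /xsection /= => -[[-> /set_mem] | [-> /set_mem]].
have dis (G : Omega -> bool) (U V : set Z) :
  (G @^-1` [set true] `&` ZZ @^-1` U) `&` (G @^-1` [set false] `&` ZZ @^-1` V) = set0.
  by apply/seteqP; split => w //= [[-> _] [+ _]].
rewrite !dec.
have -> : (fun w => ~~ B w) @^-1` [set true] = B @^-1` [set false].
  by apply/seteqP; split => w /=; case: (B w).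
have -> : (fun w => ~~ B w) @^-1` [set false] = B @^-1` [set true].
  by apply/seteqP; split => w /=; case: (B w).
rewrite measureU.
2,3: by apply: measurableI; [exact: mBb | exact/mZA/mEb].
2: by rewrite dis.
rewrite measureU.
2,3: by apply: measurableI; [exact: mBb | exact/mZA/mEb].
2: by rewrite setIC dis.
have hs := @half_split _ _ _ P _ _ ZZ B mB mZ PB indB.
congr (_ + _); exact: (etrans (hs _ _ (mEb _)) (esym (hs _ _ (mEb _)))).
Qed.

Theorem lemma3 (R : realType) (d0 : measure_display) (Omega : measurableType d0)
  (P : probability Omega R) (d : nat) (Xs : set (d.-tuple R))
  (X : Omega -> d.-tuple R) (T : Omega -> bool) (Y0 Y1 : Omega -> R)
  (B : Omega -> bool)
  (mXs : measurable Xs) (XinXs : forall w, Xs (X w))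
  (mX : measurable_fun setT X) (mT : measurable_fun setT T)
  (mY0 : measurable_fun setT Y0) (mY1 : measurable_fun setT Y1)
  (mB : measurable_fun setT B)
  (PB : P (B @^-1` [set true]) = (2^-1)%:E)
  (indB : indep_rv P B (fun w => (X w, T w, Y0 w, Y1 w)))
  (h : d.-tuple R * bool -> R) (mh : measurable_fun (Xs `*` setT) h) :
  let S := fun w => if B w then T w else ~~ T w in
  sq_loss P X S (sel_outcome Y0 Y1 S) h =
  sq_loss P X (fun w => ~~ S w) (sel_outcome Y0 Y1 (fun w => ~~ S w)) h.
Proof.
move=> S; rewrite /sq_loss.
set Z := fun w => (X w, T w, Y0 w, Y1 w).
have mZ : measurable_fun setT Z.
  apply: measurable_fun_pair; last exact: mY1.
  apply: measurable_fun_pair; last exact: mY0.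
  exact: measurable_fun_pair.
pose s (p : bool * (d.-tuple R * bool * R * R)) :=
  if p.1 then p.2.1.1.2 else ~~ p.2.1.1.2.
pose fr (p : bool * (d.-tuple R * bool * R * R)) : R :=
  ((if s p then p.2.2 else p.2.1.2) - h (p.2.1.1.1, s p)) ^+ 2.
pose F := EFin \o fr.
pose D := [set p : bool * (d.-tuple R * bool * R * R) | Xs p.2.1.1.1].
have mp1 : measurable_fun setT (fun p : bool * (d.-tuple R * bool * R * R) => p.2.1.1.1).
  by apply: measurableT_comp => //; apply: measurableT_comp => //; apply: measurableT_comp.
have mp2 : measurable_fun setT (fun p : bool * (d.-tuple R * bool * R * R) => p.2.1.1.2).
  by apply: measurableT_comp => //; apply: measurableT_comp => //; apply: measurableT_comp.
have mp3 : measurable_fun setT (fun p : bool * (d.-tuple R * bool * R * R) => p.2.1.2).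
  by apply: measurableT_comp => //; apply: measurableT_comp.
have mp4 : measurable_fun setT (fun p : bool * (d.-tuple R * bool * R * R) => p.2.2).
  by apply: measurableT_comp.
have mneg : measurable_fun setT negb by [].
have ms : measurable_fun setT s.
  apply: measurable_fun_ifT => //.
  exact: measurableT_comp mneg mp2.
have mD : measurable D by rewrite -[X in measurable X]setTI; exact: mp1.
have mF : measurable_fun D F.
  apply/measurable_EFinP; apply: measurable_funX; apply: measurable_funB.
    apply: measurable_funS (measurableT) _ _ => //.
    exact: measurable_fun_ifT.
  apply: (measurable_comp (F := Xs `*` setT)) => //.
  - exact: measurableX.
  - by move=> _ [p Dp <-]; split.
  - apply: measurable_funS (measurableT) _ _ => //.
    exact: measurable_fun_pair.
have F0 : {in D, forall p, (0 <= F p)%E} by move=> p _; rewrite lee_fin sqr_ge0.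
have mW : measurable_fun setT (fun w => (B w, Z w)) by exact: measurable_fun_pair.
have mW' : measurable_fun setT (fun w => (~~ B w, Z w)).
  by apply: measurable_fun_pair => //; exact: measurableT_comp mneg mB.
have preW (G : Omega -> bool) : (fun w => (G w, Z w)) @^-1` D = setT.
  by apply/seteqP; split => w //= _; exact: XinXs.
transitivity (\int[P]_w F (B w, Z w))%E; first by [].
transitivity (\int[P]_w F (~~ B w, Z w))%E; last first.
  apply: eq_integral => w _; rewrite /F /fr /s /sel_outcome /S /=.
  by case: (B w); case: (T w).
have e1 : (\int[pushforward P (fun w => (B w, Z w))]_(p in D) F p)%E =
    (\int[P]_w F (B w, Z w))%E.
  by rewrite ge0_integral_pushforward // preW.
have e2 : (\int[pushforward P (fun w => (~~ B w, Z w))]_(p in D) F p)%E =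
    (\int[P]_w F (~~ B w, Z w))%E.
  by rewrite ge0_integral_pushforward // (preW (fun w => ~~ B w)).
rewrite -e1 -e2.
apply: eq_measure_integral => A mA _.
exact: (@push_swap _ _ _ P _ _ Z B mB mZ PB indB).
Qed.
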